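(* Let $s\in\{+1,-1\}$ and let $(X,d,\lambda)$ be an admissible space, with orthonormal basis $\{\varphi_n\}_{n\in\mathbb N}$ of $L^2(X)$ and point $\mathfrak o\in X$ as in the definition of admissibility. Then for every nonzero $f\in\mathcal A_s(X)$, $$\lambda(\{x\in X: f(x)<0\})\sum_{n\ge 0:\ s\widehat f(n)<0}\|\varphi_n\|_{L^\infty(X)}^2\ \ge\ \frac1{16}.$$ In particular, $$\lambda\big(B(\mathfrak o, r(f;X))\big)\sum_{n=0}^{k(s\widehat f)-1}\|\varphi_n\|_{L^\infty(X)}^2\ \ge\ \frac1{16}.$$
   Context: $(X,d,\lambda)$ is a metric measure space with distance $d$ and probability measure $\lambda$; $L^2(X)$ denotes square-integrable real-valued functions; $B(x,r)=\{y\in X: d(x,y)\le r\}$; $\mathbb N=\{0,1,2,\dots\}$. The space is admissible if there exist an orthonormal basis $\{\varphi_n:X\to\mathbb R\}_{n\in\mathbb N}$ of $L^2(X)$ and a point $\mathfrak o\in X$ such that $\varphi_0\equiv1$ and, for every $n$, $\varphi_n(\mathfrak o):=\lim_{r\to0^+}\frac{1}{\lambda(B(\mathfrak o,r))}\int_{B(\mathfrak o,r)}\varphi_n\,d\lambda$ exists and equals $\|\varphi_n\|_{L^\infty(X)}<\infty$. For $f\in L^2(X)$ write $\widehat f(n)=\int_X f\varphi_n\,d\lambda$. For $s\in\{+1,-1\}$, $\mathcal A_s(X)$ is the set of real-valued $f\in L^2(X)$ such that $\sum_{n}|\widehat f(n)|\,\|\varphi_n\|_{L^\infty(X)}<\infty$,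 $\widehat f(0)\le 0$, the sequence $\{s\widehat f(n)\}_n$ is eventually nonnegative, and $sf(\mathfrak o)\le 0$, where $f(\mathfrak o):=\sum_n\widehat f(n)\varphi_n(\mathfrak o)$. Write $r_1\sim r_2$ if $\lambda(B(\mathfrak o,r_1))=\lambda(B(\mathfrak o,r_2))$; let $\mathcal R$ be the set of infima of the equivalence classes of $[0,\infty)$ under $\sim$. Define $r(f;X)=\inf\{r\in\mathcal R: f(x)\ge0\text{ for }\lambda\text{-a.e. }x\text{ with }d(x,\mathfrak o)\ge r\}$ and $k(s\widehat f)=\min\{k\ge1: s\widehat f(n)\ge0\text{ for all }n\ge k\}$. *)

(* Defs.v *)
From HB Require Import structures.
From mathcomp Require Import all_boot all_order all_algebra.
From mathcomp Require Import all_classical all_reals all_analysis.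
Set Implicit Arguments. Unset Strict Implicit. Unset Printing Implicit Defensive.
Import Order.TTheory GRing.Theory Num.Theory.
Import numFieldNormedType.Exports.
Local Open Scope classical_set_scope.
Local Open Scope ring_scope.

Section Defs.
Context {d : measure_display} {X : measurableType d} {R : realType}.

Definition is_metric (dist : X -> X -> R) : Prop :=
  [/\ forall x y, 0 <= dist x y,
      forall x y, dist x y = 0 <-> x = y,
      forall x y, dist x y = dist y x &
      forall x y z, dist x z <= dist x y + dist y z].

Definition metric_open (dist : X -> X -> R) (A : set X) : Prop :=
  forall x, A x -> exists2 e : R, 0 < e & [set y | dist x y < e] `<=` A.

(** closed ball B(o, r) = {y | d(o,y) <= r}; for r : \bar R, so that
    B(o, +oo) = X. *)
Definition cball (dist : X -> X -> R) (o : X) (r : R) : set X :=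
  [set y | dist o y <= r].
Definition ecball (dist : X -> X -> R) (o : X) (r : \bar R) : set X :=
  [set y | ((dist o y)%:E <= r)%E].

Variable P : probability X R.

Definition L2 (f : X -> R) : Prop :=
  measurable_fun setT f /\ P.-integrable setT (fun x => ((f x) ^+ 2)%:E).

Definition fcoef (phi : nat -> X -> R) (f : X -> R) (n : nat) : R :=
  Rintegral P setT (fun x => f x * phi n x).

Definition Linf (g : X -> R) : \bar R := ('N[P]_(+oo%E)[EFin \o g])%E.

Definition orthonormal_basis (phi : nat -> X -> R) : Prop :=
  (forall n, L2 (phi n)) /\
  (forall n m, Rintegral P setT (fun x => phi n x * phi m x)
               = if n == m then 1 else 0) /\
  (forall f, L2 f ->
     (fun N => (\int[P]_x (((f x - \sum_(0 <= i < N) fcoef phi f i * phi i x)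
                              ^+ 2)%:E))%E) @ \oo --> 0%E).

Definition ball_avg (dist : X -> X -> R) (o : X) (g : X -> R) (r : R) : R :=
  (fine (P (cball dist o r)))^-1 * Rintegral P (cball dist o r) g.

Definition val_at (dist : X -> X -> R) (o : X) (g : X -> R) : R :=
  lim (ball_avg dist o g @ 0^'+).

Definition admissible (dist : X -> X -> R) (phi : nat -> X -> R) (o : X) : Prop :=
  orthonormal_basis phi /\
  {ae P, forall x, phi 0%N x = 1} /\
  (forall n, (Linf (phi n) < +oo)%E /\
     ball_avg dist o (phi n) @ 0^'+ --> fine (Linf (phi n))).

Definition val_series (dist : X -> X -> R) (phi : nat -> X -> R) (o : X)
    (f : X -> R) : R :=
  limn (series (fun n => fcoef phi f n * val_at dist o (phi n))).

Definition A_s (s : R) (dist : X -> X -> R) (phi : nat -> X -> R) (o : X)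
    (f : X -> R) : Prop :=
  [/\ L2 f,
      (\sum_(n <oo) (`|fcoef phi f n| * fine (Linf (phi n)))%:E < +oo)%E,
      fcoef phi f 0%N <= 0,
      (\forall n \near \oo, 0 <= s * fcoef phi f n) &
      s * val_series dist phi o f <= 0].

(** the set R of infima of the classes of [0,oo) under r1 ~ r2 *)
Definition Rset (dist : X -> X -> R) (o : X) : set R :=
  [set inf [set r' | 0 <= r' /\ P (cball dist o r') = P (cball dist o r)]
  | r in [set r : R | 0 <= r]].

(** r(f;X), as an extended real (inf of the empty set is +oo) *)
Definition r_fX (dist : X -> X -> R) (o : X) (f : X -> R) : \bar R :=
  ereal_inf (EFin @` [set r | Rset dist o r /\
     {ae P, forall x, r <= dist x o -> 0 <= f x}]).

End Defs.

Definition kmin {R : realType} (a : nat -> R) : nat :=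
  xget 0%N [set k | [/\ (1 <= k)%N, (forall n, (k <= n)%N -> 0 <= a n) &
     forall k', (1 <= k')%N -> (forall n, (k' <= n)%N -> 0 <= a n) -> (k <= k')%N]].

(* Main.v *)
Require Import Defs.
From HB Require Import structures.
From mathcomp Require Import all_boot all_order all_algebra.
From mathcomp Require Import all_classical all_reals all_analysis.
From mathcomp Require Import ring lra measurable_realfun ess_sup_inf.
Import Order.TTheory GRing.Theory Num.Theory.
Import numFieldNormedType.Exports.
Local Open Scope classical_set_scope.
Local Open Scope ring_scope.

Section Aux.
Set Implicit Arguments.
Context {d : measure_display} {X : measurableType d} {R : realType}.
Variable P : probability X R.

Lemma norm_mul_le_sq (a b : R) : `|a * b| <= a ^+ 2 + b ^+ 2.
Proof.
rewrite ler_norml; apply/andP; split; nra.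
Qed.

Lemma L2_int_mul (g h : X -> R) : L2 P g -> L2 P h ->
  P.-integrable setT (fun x => (g x * h x)%:E).
Proof.
move=> [mg ig] [mh ih].
apply: (@le_integrable _ _ _ P setT measurableT _ (fun x => (g x ^+ 2)%:E + (h x ^+ 2)%:E)%E).
- by apply/measurable_EFinP; apply: measurable_funM.
- move=> x _; rewrite -EFinD !abse_EFin lee_fin.
  rewrite (ger0_norm (_ : 0 <= g x ^+ 2 + h x ^+ 2)); last by nra.
  exact: norm_mul_le_sq.
- exact: integrableD.
Qed.

Lemma eqint (f g : X -> \bar R) : 
  P.-integrable setT f -> (forall x, f x = g x) -> P.-integrable setT g.
Proof. by move=> + fg; apply: (eq_integrable measurableT f g) => x _; rewrite fg. Qed.

Lemma L2_cst (k : R) : L2 P (fun=> k).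
Proof.
split; first exact: measurable_cst.
exact: (@finite_measure_integrable_cst _ _ _ P setT (k ^+ 2) measurableT).
Qed.

Lemma L2_int (g : X -> R) : L2 P g -> P.-integrable setT (EFin \o g).
Proof.
move=> Lg; have H1 := L2_int_mul Lg (L2_cst 1). apply: (@eqint _ _ H1) => x.
by rewrite mulr1.
Qed.

Lemma L2D (g h : X -> R) : L2 P g -> L2 P h -> L2 P (fun x => g x + h x).
Proof.
move=> Lg Lh; split; first by apply: measurable_funD; [case: Lg|case: Lh].
have i1 := L2_int_mul Lg Lg; have i2 := L2_int_mul Lg Lh; have i3 := L2_int_mul Lh Lh.
have i12 := integrableZl measurableT 2 i2.
apply: (@eqint _ _ (integrableD measurableT (integrableD measurableT i1 i12) i3)) => x /=. rewrite -!EFinM -!EFinD; congr EFin; ring.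
Qed.

Lemma L2Z (k : R) (g : X -> R) : L2 P g -> L2 P (fun x => k * g x).
Proof.
move=> Lg; split; first by apply: measurable_funM => //; case: Lg.
have i1 := integrableZl measurableT (k ^+ 2) (L2_int_mul Lg Lg).
apply: (@eqint _ _ i1) => x /=; rewrite -EFinM; congr EFin; ring.
Qed.

Lemma L2_sum (K : nat) (c : nat -> R) (ph : nat -> X -> R) :
  (forall n, L2 P (ph n)) -> L2 P (fun x => \sum_(0 <= i < K) c i * ph i x).
Proof.
move=> Lph; elim: K => [|K IH].
  suff -> : (fun x => \sum_(0 <= i < 0) c i * ph i x) = (fun=> 0) by exact: L2_cst.
  by apply/funext => x; rewrite big_geq.
suff -> : (fun x => \sum_(0 <= i < K.+1) c i * ph i x) =
  (fun x => \sum_(0 <= i < K) c i * ph i x + c K * ph K x).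
  exact: L2D IH (L2Z (c K) (Lph K)).
by apply/funext => x; rewrite big_nat_recr.
Qed.

Definition ip (g h : X -> R) := Rintegral P setT (fun x => g x * h x).

Lemma ipC g h : ip g h = ip h g.
Proof. by rewrite /ip; apply: eq_Rintegral => x _; rewrite mulrC. Qed.

Lemma ipDr g h1 h2 : L2 P g -> L2 P h1 -> L2 P h2 ->
  ip g (fun x => h1 x + h2 x) = ip g h1 + ip g h2.
Proof.
move=> Lg L1 L2'; rewrite /ip -RintegralD //; last 2 first.
- exact: L2_int_mul.
- exact: L2_int_mul.
by apply: eq_Rintegral => x _; rewrite mulrDr.
Qed.

Lemma ipZr g h k : L2 P g -> L2 P h ->
  ip g (fun x => k * h x) = k * ip g h.
Proof.
move=> Lg Lh; rewrite /ip -RintegralZl //; last exact: L2_int_mul.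
by apply: eq_Rintegral => x _; rewrite mulrCA.
Qed.

Lemma ipBl g1 g2 h : L2 P g1 -> L2 P g2 -> L2 P h ->
  ip (fun x => g1 x - g2 x) h = ip g1 h - ip g2 h.
Proof.
move=> L1 L2' Lh; rewrite /ip -RintegralB //; last 2 first.
- exact: L2_int_mul.
- exact: L2_int_mul.
by apply: eq_Rintegral => x _; rewrite mulrBl.
Qed.

Lemma ip_sumr g (K : nat) (c : nat -> R) (ph : nat -> X -> R) :
  L2 P g -> (forall n, L2 P (ph n)) ->
  ip g (fun x => \sum_(0 <= i < K) c i * ph i x) = \sum_(0 <= i < K) c i * ip g (ph i).
Proof.
move=> Lg Lph; elim: K => [|K IH].
  rewrite big_geq // /ip.
  under eq_Rintegral do rewrite big_geq // mulr0.
  by rewrite Rintegral_cst // mul0r.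
rewrite big_nat_recr //=.
rewrite (_ : (fun x => _) = (fun x => \sum_(0 <= i < K) c i * ph i x + c K * ph K x)); last first.
  by apply/funext => x; rewrite big_nat_recr.
by rewrite ipDr ?IH ?ipZr //; [exact: L2_sum| exact: L2Z].
Qed.


Lemma L2B (g h : X -> R) : L2 P g -> L2 P h -> L2 P (fun x => g x - h x).
Proof.
move=> Lg Lh.
suff -> : (fun x => g x - h x) = (fun x => g x + (-1) * h x) by exact: L2D (L2Z _ Lh).
by apply/funext => x; rewrite mulN1r.
Qed.

Lemma ipBr g h1 h2 : L2 P g -> L2 P h1 -> L2 P h2 ->
  ip g (fun x => h1 x - h2 x) = ip g h1 - ip g h2.
Proof.
by move=> Lg L1 L2'; rewrite ipC ipBl // (ipC h1) (ipC h2).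
Qed.

Variables (phi : nat -> X -> R) (f : X -> R).
Hypothesis Lphi : forall n, L2 P (phi n).
Hypothesis orth : forall n m, Rintegral P setT (fun x => phi n x * phi m x)
               = if n == m then 1 else 0.
Hypothesis Lf : L2 P f.

Let c n := fcoef P phi f n.
Let S K := fun x => \sum_(0 <= i < K) c i * phi i x.

Lemma LS K : L2 P (S K).
Proof. exact: L2_sum. Qed.

Lemma ip_phi_S i K : ip (phi i) (S K) = if (i < K)%N then c i else 0.
Proof.
rewrite /S ip_sumr //.
elim: K => [|K IH]; first by rewrite big_geq.
rewrite big_nat_recr //= IH /ip orth.
case: (ltngtP i K) => [iK|Ki|<-].
- by rewrite (ltn_trans iK) // mulr0 addr0.
- by rewrite ltnNge Ki mulr0 addr0.
- by rewrite ltnSn mulr1 add0r.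
Qed.

Lemma ip_f_S K : ip f (S K) = \sum_(0 <= i < K) c i ^+ 2.
Proof.
rewrite /S ip_sumr //; apply: eq_bigr => i _; by rewrite expr2.
Qed.

Lemma ip_S_S K : ip (S K) (S K) = \sum_(0 <= i < K) c i ^+ 2.
Proof.
rewrite {2}/S ip_sumr //; last exact: LS.
apply: eq_big_nat => i /andP[_ iK].
by rewrite ipC ip_phi_S iK expr2.
Qed.

Lemma parseval_id K : ip (fun x => f x - S K x) (fun x => f x - S K x) =
  ip f f - \sum_(0 <= i < K) c i ^+ 2.
Proof.
have LfS : L2 P (fun x => f x - S K x) by exact: L2B (LS K).
rewrite ipBl // ?LS //. rewrite (ipBr Lf Lf (LS K)). rewrite (ipBr (LS K) Lf (LS K)).
rewrite ip_f_S ip_S_S ipC ip_f_S.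
  by rewrite subrr subr0.
exact: LS.
Qed.

Lemma sumsq_cvg :
  (fun N => (\int[P]_x (((f x - \sum_(0 <= i < N) fcoef P phi f i * phi i x)
                              ^+ 2)%:E))%E) @ \oo --> 0%E ->
  (fun K => \sum_(0 <= i < K) c i ^+ 2) @ \oo --> ip f f.
Proof.
have E : forall K, (\int[P]_x (((f x - S K x) ^+ 2)%:E))%E
                 = (ip f f - \sum_(0 <= i < K) c i ^+ 2)%:E.
  move=> K; rewrite -parseval_id.
  have LfS : L2 P (fun x => f x - S K x) by exact: L2B (LS K).
  have I := L2_int_mul LfS LfS.
  rewrite /ip /Rintegral (fineK (integrable_fin_num measurableT I)).
  by apply: eq_integral => x _; rewrite expr2.
have -> : (fun N => (\int[P]_x (((f x - \sum_(0 <= i < N) fcoef P phi f i * phi i x)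
                              ^+ 2)%:E))%E) =
          (fun K => (ip f f - \sum_(0 <= i < K) c i ^+ 2)%:E).
  by apply/funext => K; rewrite -E.
move=> /fine_cvg /= h.
have h2 := cvgB (cvg_cst (ip f f)) h.
rewrite subr0 in h2.
have -> : (fun K => \sum_(0 <= i < K) c i ^+ 2) =
   (fun K => ip f f - (ip f f - \sum_(0 <= i < K) c i ^+ 2)).
  by apply/funext => K; rewrite opprB addrC subrK.
exact: h2.
Qed.

Lemma sumsq_le K : \sum_(0 <= i < K) c i ^+ 2 <= ip f f.
Proof.
rewrite -subr_ge0 -parseval_id /ip; apply: Rintegral_ge0 => x _.
by rewrite -expr2 sqr_ge0.
Qed.

End Aux.

Section Aux2.
Set Implicit Arguments.
Context {d : measure_display} {X : measurableType d} {R : realType}.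
Variable P : probability X R.

Lemma Linf_bound (g : X -> R) : (Linf P g < +oo)%E ->
  {ae P, forall x, `|g x| <= fine (Linf P g)}.
Proof.
move=> Hlt.
have Hge := ess_sup_ge P (abse \o (EFin \o g)).
have E : Linf P g = ess_sup P (abse \o (EFin \o g)).
  by rewrite /Linf unlock /= probability_setT lte01.
have fin : Linf P g \is a fin_num by rewrite ge0_fin_numE // Lnorm_ge0.
apply: filterS Hge => x /= hx.
by rewrite -lee_fin (fineK fin) E -abse_EFin.
Qed.

Lemma ae_le_Rint (g h : X -> R) : P.-integrable setT (EFin \o g) ->
  P.-integrable setT (EFin \o h) -> {ae P, forall x, g x <= h x} ->
  Rintegral P setT g <= Rintegral P setT h.
Proof.
move=> ig ih [N [mN PN sub]].
rewrite /Rintegral (negligible_integral mN measurableT ig PN).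
rewrite (negligible_integral mN measurableT ih PN).
apply: (@le_Rintegral _ _ _ P (setT `\` N) g h).
- exact: measurableD.
- by apply: (integrableS measurableT _ _ ig) => //; exact: measurableD.
- by apply: (integrableS measurableT _ _ ih) => //; exact: measurableD.
- move=> x [_ Nx]; apply: contrapT => nle; apply: Nx; exact: sub.
Qed.

End Aux2.

Section Seq.
Context {R : realType}.

Lemma series_part (s : R) (c L : nat -> R) (K0 M : nat -> R) : True.
Abort.

Lemma series_part (s : R) (c L : nat -> R) (K0 : nat) (M : R) :
  (s = 1 \/ s = -1) -> (forall n, 0 <= L n) ->
  (forall n, (K0 <= n)%N -> 0 <= s * c n) ->
  (forall K, \sum_(0 <= i < K) `|c i| * L i <= M) ->
  s * limn (series (fun n => c n * L n)) <= 0 ->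
  forall K, (K0 <= K)%N -> \sum_(0 <= i < K) s * c i * L i <= 0.
Proof.
move=> hs L0 hK0 hM hlim K KK0.
set U := fun K => \sum_(0 <= i < K) s * c i * L i.
have ss : s * s = 1 by case: hs => ->; rewrite ?mulr1 ?mulrNN ?mulr1.
have ns : `|s| = 1 by case: hs => ->; rewrite ?normr1 ?normrN1.
have Umono : forall n m, (K0 <= n)%N -> (n <= m)%N -> U n <= U m.
  move=> n m Kn nm; rewrite /U (big_cat_nat (leq0n n) nm) /= lerDl.
  rewrite big_nat_cond; apply: sumr_ge0 => i /andP[/andP[ni _] _].
  by apply: mulr_ge0 => //; apply: hK0; exact: leq_trans Kn ni.
have Ubd : forall K, U K <= M.
  move=> K'; apply: le_trans (hM K'); apply: ler_sum => i _.
  apply: le_trans (ler_norm _) _.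
  by rewrite -mulrA normrM ns mul1r normrM (ger0_norm (L0 i)).
have cvgU : cvgn U.
  apply: (near_nondecreasing_is_cvgn (M:=M)); last exact: nearW.
  by exists K0 => // n /= Kn m nm; exact: Umono.
have Eser : series (fun n => c n * L n) = (fun K => s * U K).
  apply/funext => K'; rewrite /series /= /U big_distrr /=.
  by apply: eq_bigr => i _; rewrite !mulrA ss mul1r.
have limE : limn (series (fun n => c n * L n)) = s * limn U.
  by rewrite Eser; apply: cvg_lim => //; apply: cvgMr.
rewrite limE mulrA ss mul1r in hlim.
apply: le_trans hlim; apply: limr_ge => //.
by exists K => // m /= Km; exact: Umono.
Qed.

Lemma amgm (x a b : R) : 0 <= x -> 0 <= a -> 0 <= b ->
  (forall t, 0 < t -> 2 * x <= t * a + b / t) -> x ^+ 2 <= a * b.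
Proof.
move=> x0 a0 b0 H.
move: x0; rewrite le_eqVlt => /predU1P[<-|xp]; first by rewrite expr0n mulr_ge0.
have xn0 : x != 0 := lt0r_neq0 xp.
move: a0; rewrite le_eqVlt => /predU1P[a0|ap].
  have b1 : 0 < b + 1 by rewrite ltr_wpDl.
  have tp : 0 < (b + 1) / x by exact: divr_gt0.
  have := H _ tp; rewrite -a0 mulr0 add0r.
  set u := b / _ => hu.
  have e : u * (b + 1) = b * x.
    by rewrite /u invf_div mulrA divfK // lt0r_neq0.
  have h1 := ler_wpM2r (ltW b1) hu.
  have h2 : 0 <= b * x by exact: mulr_ge0 (ltW xp).
  exfalso; move: h1; rewrite e => h1.
  have h3 : 2 * x * (b + 1) = 2 * (b * x) + 2 * x by ring.
  rewrite h3 in h1.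
  have h5 : b * x <= 2 * (b * x) by clear -h2; lra.
  have : 2 * x <= 0 by rewrite -(lerD2l (2 * (b * x))) addr0 (le_trans h1).
  rewrite pmulr_rle0 // => /(lt_le_trans xp); by rewrite ltxx.
have tp : 0 < x / a by exact: divr_gt0.
have := H _ tp; rewrite divfK; last exact: lt0r_neq0 ap.
set u := b / _ => hu.
have e : u * x = a * b.
  by rewrite /u invf_div mulrA divfK 1?mulrC // lt0r_neq0.
have h1 := ler_wpM2r (ltW xp) hu.
rewrite [X in _ <= X]mulrDl e in h1.
have h4 : 2 * x * x = x ^+ 2 + x ^+ 2 by rewrite expr2; ring.
rewrite h4 -expr2 lerD2l in h1.
exact: h1.
Qed.

Lemma final_alg (Q T F p A Sg : R) : 0 < Q -> 0 <= T -> Q <= 4 * T * F ->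
  F ^+ 2 <= p * Q -> T ^+ 2 <= A * Sg -> A <= Q -> 0 <= Sg -> 0 <= p ->
  16^-1 <= p * Sg.
Proof.
move=> Q0 T0 h1 h2 h3 h4 S0 p0.
have F0 : 0 <= F.
  rewrite leNgt; apply/negP => Fn.
  have : 4 * T * F <= 0 by rewrite -mulrA; apply: mulr_ge0_le0 => //; apply: mulr_ge0_le0 => //; exact: ltW.
  lra.
have h5 : Q ^+ 2 <= (4 * T * F) ^+ 2 by rewrite ler_sqr ?nnegrE //; lra.
have h6 : T ^+ 2 * F ^+ 2 <= (Q * Sg) * (p * Q).
  apply: ler_pM; [exact: sqr_ge0 | exact: sqr_ge0 | | exact: h2].
  apply: le_trans h3 _; exact: ler_wpM2r.
have e1 : (4 * T * F) ^+ 2 = 16 * (T ^+ 2 * F ^+ 2) by ring.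
have e2 : (Q * Sg) * (p * Q) = Q ^+ 2 * (p * Sg) by ring.
have Q2 : 0 < Q ^+ 2 by exact: exprn_gt0.
have h7 : Q ^+ 2 * 1 <= Q ^+ 2 * (16 * (p * Sg)).
  rewrite mulr1; apply: le_trans h5 _; rewrite e1; lra.
rewrite ler_pM2l // in h7.
lra.
Qed.
End Seq.

Section Aux3.
Set Implicit Arguments.
Context {d : measure_display} {X : measurableType d} {R : realType}.

Lemma cball_meas (dist : X -> X -> R) o r : is_metric dist ->
  (forall A : set X, metric_open dist A -> measurable A) ->
  measurable (cball dist o r).
Proof.
move=> [d0 d_eq dsym dtri] hop.
rewrite -(setCK (cball dist o r)); apply: measurableC; apply: hop.
move=> x /= hx.
have hx' : r < dist o x by rewrite ltNge; apply/negP.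
exists (dist o x - r); first by rewrite subr_gt0.
move=> y /= hy hyc.
move: hyc; rewrite /cball /= => hyc.
have := dtri o y x; rewrite (dsym y x); lra.
Qed.

Lemma sum_cut (Pr : pred nat) (F : nat -> R) K0 K : (K0 <= K)%N ->
  (forall i, (K0 <= i)%N -> ~~ Pr i) ->
  \sum_(0 <= i < K | Pr i) F i = \sum_(0 <= i < K0 | Pr i) F i.
Proof.
move=> KK hP; rewrite (big_cat_nat (leq0n K0) KK) /=.
rewrite [X in _ + X]big_nat_cond [X in _ + X]big1 ?addr0 // => i.
by move=> /andP[/andP[Ki _] Pi]; move: (hP i Ki); rewrite Pi.
Qed.

End Aux3.

Theorem mainTheorem2 (d : measure_display) (X : measurableType d) (R : realType)
    (P : probability X R) (dist : X -> X -> R) (phi : nat -> X -> R) (o : X)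
    (s : R) (f : X -> R) :
  (s = 1 \/ s = -1) ->
  is_metric dist ->
  (forall A : set X, metric_open dist A -> measurable A) ->
  admissible P dist phi o ->
  A_s P s dist phi o f ->
  ~ {ae P, forall x, f x = 0} ->
  ((P [set x | (f x < 0)%R] *
      \sum_(n <oo | (s * fcoef P phi f n < 0)%R) ((fine (Linf P (phi n))) ^+ 2)%:E
    >= (16^-1)%:E)%E /\
   (P (ecball dist o (r_fX P dist o f)) *
      (\sum_(0 <= n < kmin (fun n => s * fcoef P phi f n))
          (fine (Linf P (phi n))) ^+ 2)%:E
    >= (16^-1)%:E)%E).
Proof.
move=> hs hmet hopen [[Lphi [orth conv]] [phi0 Hlinf]] [Lf hsum hc0 hnear hval] nz.
set c := fcoef P phi f.
set L := fun n => fine (Linf P (phi n)).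
have L0 : forall n, 0 <= L n by move=> n; apply: fine_ge0; exact: Lnorm_ge0.
have valE : forall n, val_at P dist o (phi n) = L n.
  by move=> n; rewrite /val_at; apply: cvg_lim => //; exact: (Hlinf n).2.
have [K0 _ HK0] := hnear.
have HK0' : forall n, (K0 <= n)%N -> 0 <= s * c n by move=> n; apply: HK0.
set M := fine (\sum_(n <oo) (`|c n| * L n)%:E)%E.
have hM : forall K, \sum_(0 <= i < K) `|c i| * L i <= M.
  move=> K.
  have ge0 : forall n, (0 <= (`|c n| * L n)%:E)%E.
    by move=> n; rewrite lee_fin mulr_ge0.
  have fin : (\sum_(n <oo) (`|c n| * L n)%:E)%E \is a fin_num.
    by rewrite ge0_fin_numE //; apply: nneseries_ge0 => n _ _; exact: ge0.
  rewrite -lee_fin /M (fineK fin) -sumEFin.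
  exact: nneseries_lim_ge.
have hval' : s * limn (series (fun n => c n * L n)) <= 0.
  have -> : (fun n => c n * L n) =
      (fun n => fcoef P phi f n * val_at P dist o (phi n)).
    by apply/funext => n; rewrite valE.
  exact: hval.
have Hneg := @series_part R s c L K0 M hs L0 HK0' hM hval'.
set T := \sum_(0 <= i < K0 | s * c i < 0) `|c i| * L i.
set A := \sum_(0 <= i < K0 | s * c i < 0) c i ^+ 2.
set Sg := \sum_(0 <= i < K0 | s * c i < 0) L i ^+ 2.
have T0 : 0 <= T by apply: sumr_ge0 => i _; exact: mulr_ge0.
have Sg0 : 0 <= Sg by apply: sumr_ge0 => i _; exact: sqr_ge0.
have ns : `|s| = 1 by case: hs => ->; rewrite ?normr1 ?normrN1.
have notP : forall i, (K0 <= i)%N -> ~~ (s * c i < 0).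
  by move=> i Ki; rewrite -leNgt; exact: HK0'.
have BT : forall K, (K0 <= K)%N -> \sum_(0 <= i < K) `|c i| * L i <= 2 * T.
  move=> K KK.
  have e : forall i, `|c i| * L i =
      s * c i * L i + 2 * (if s * c i < 0 then `|c i| * L i else 0).
    move=> i; have ec : `|c i| = `|s * c i| by rewrite normrM ns mul1r.
    case: ifPn => neg.
    - by rewrite ec ltr0_norm //; ring.
    - by rewrite ec ger0_norm ?mulr0 ?addr0 // leNgt.
  under eq_bigr do rewrite e.
  rewrite big_split /= -mulr_sumr -big_mkcond /= (sum_cut _ _ _ _ KK notP).
  have := Hneg K KK; rewrite -/T; lra.
have TAS : T ^+ 2 <= A * Sg.
  apply: amgm => //; first by apply: sumr_ge0 => i _; exact: sqr_ge0.
  move=> t t0.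
  rewrite /T /A /Sg mulr_sumr mulr_suml mulr_sumr -big_split /=.
  apply: ler_sum => i _.
  have hc : c i ^+ 2 = `|c i| ^+ 2 by rewrite real_normK ?num_real.
  rewrite hc; set a := `|c i|; set l := L i.
  have e : t * (t * a ^+ 2 + l ^+ 2 / t - 2 * (a * l)) = (t * a - l) ^+ 2.
    by field; rewrite lt0r_neq0.
  rewrite -subr_ge0 -(pmulr_rge0 _ t0) e; exact: sqr_ge0.
set Q := ip P f f.
have AQ : A <= Q.
  have hsq := sumsq_le phi Lphi orth Lf K0; apply: (le_trans _ hsq).
  rewrite /A big_mkcond /=; apply: ler_sum => i _.
  by case: ifPn => // _; exact: sqr_ge0.
have mf : measurable_fun setT f by case: Lf.
have Q0 : 0 < Q.
  have Qge : 0 <= Q by apply: Rintegral_ge0 => x _; rewrite -expr2 sqr_ge0.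
  rewrite lt_neqAle Qge andbT; apply/negP => /eqP Q0'.
  apply: nz.
  have If := L2_int_mul Lf Lf.
  have fin := integrable_fin_num measurableT If.
  have I0 : (\int[P]_x (f x * f x)%:E)%E = 0%E.
    by rewrite -(fineK fin); congr EFin; rewrite Q0'.
  have : (\int[P]_x `|(f x * f x)%:E|)%E = 0%E.
    rewrite -I0; apply: eq_integral => x _.
    by rewrite gee0_abs // lee_fin -expr2 sqr_ge0.
  move/(ae_eq_integral_abs P measurableT (measurable_int _ If)) => H.
  apply: filterS H => x /= /(_ I) [].
  by move/eqP; rewrite mulf_eq0 orbb => /eqP.
have mA : measurable [set x | f x < 0].
  suff -> : [set x | f x < 0] = f @^-1` `]-oo, (0:R)[.
    by rewrite -[X in measurable X]setTI; exact: mf measurableT _ (measurable_itv _).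
  by apply/seteqP; split => x /=; rewrite in_itv.
have pfin : P [set x | f x < 0] \is a fin_num.
  rewrite ge0_fin_numE ?measure_ge0 //.
  exact: le_lt_trans (probability_le1 P mA) (ltry _).
set p := fine (P [set x | f x < 0]).
have pE : P [set x | f x < 0] = p%:E by rewrite fineK.
have p0 : 0 <= p by apply: fine_ge0; exact: measure_ge0.
have L2abs : L2 P (fun x => `|f x|).
  split; first exact: measurableT_comp.
  apply: (@eqint _ _ _ P _ _ (L2_int_mul Lf Lf)) => x.
  by rewrite real_normK ?num_real // expr2.
have Iabs := L2_int L2abs.
have If := L2_int Lf.
have L2d := L2B L2abs Lf.
have Id := L2_int L2d.
set G := Rintegral P setT (fun x => `|f x| - f x).
have absE : Rintegral P setT (fun x => `|f x|) = Rintegral P setT f + G.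
  rewrite /G -RintegralD //; apply: eq_Rintegral => x _.
  by rewrite addrC subrK.
have c0E : c 0%N = Rintegral P setT f.
  have I1 := L2_int_mul Lf (Lphi 0%N).
  apply/eqP; rewrite eq_le; apply/andP; split.
  - apply: ae_le_Rint => //; apply: filterS phi0 => x /= ->; by rewrite mulr1.
  - apply: ae_le_Rint => //; apply: filterS phi0 => x /= ->; by rewrite mulr1.
have G0 : 0 <= G.
  apply: Rintegral_ge0 => x _; rewrite subr_ge0; exact: ler_norm.
have GQ : forall t, 0 < t -> 2 * (G / 2) <= t * Q + p / t.
  move=> t t0.
  have -> : 2 * (G / 2) = G by rewrite mulrC divfK // pnatr_eq0.
  have Iind := integrable_indic P mA.
  have IQ := L2_int_mul Lf Lf.
  have I2 : P.-integrable setT (EFin \o (fun x => t * (f x * f x) + \1_[set x | f x < 0] x / t)).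
    have := integrableD measurableT (integrableZl measurableT t IQ)
               (integrableZl measurableT t^-1 Iind).
    by move=> H; apply: (@eqint _ _ _ P _ _ H) => x /=; rewrite -!EFinM -EFinD (mulrC (t^-1)).
  apply: (le_trans (le_Rintegral measurableT Id I2 _)).
  - move=> x _; rewrite indicE.
    case: (ltP (f x) 0) => fx.
    + rewrite mem_set // mul1r ltr0_norm //.
      have e : t * (t * (f x * f x) + t^-1 - (- f x - f x)) = (t * f x + 1) ^+ 2.
        by field; rewrite lt0r_neq0.
      rewrite -subr_ge0 -(pmulr_rge0 _ t0) e; exact: sqr_ge0.
    + rewrite ger0_norm // subrr; apply: addr_ge0.
      * by apply: mulr_ge0; [exact: ltW | rewrite -expr2 sqr_ge0].
      * by apply: divr_ge0 => //; exact: ltW.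
  - rewrite RintegralD //; last 2 first.
    + exact: (@eqint _ _ _ P _ _ (integrableZl measurableT t IQ)).
    + exact: (@eqint _ _ _ P _ _ (integrableZr measurableT t^-1 Iind)).
    rewrite RintegralZl //.
    rewrite (@RintegralZr _ _ _ P setT (\1_[set x | f x < 0]) t^-1 measurableT Iind).
    rewrite {2}/Rintegral integral_indic // setIT -/p.
    by rewrite lexx.
have FQ : (G / 2) ^+ 2 <= p * Q.
  rewrite [p * Q]mulrC; apply: amgm; [exact: divr_ge0 | exact: ltW | exact: p0 | exact: GQ].
have hphi : \forall x \ae P, forall n, `|phi n x| <= L n.
  apply: ae_foralln => n; have := Linf_bound P (phi n) (Hlinf n).1.
  by apply: filterS => x.
have Rabs0 : 0 <= Rintegral P setT (fun x => `|f x|).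
  by apply: Rintegral_ge0 => x _.
have SB : forall K, (K0 <= K)%N -> \sum_(0 <= i < K) c i ^+ 2 <= 2 * T * G.
  move=> K KK.
  rewrite -(ip_f_S phi Lphi Lf K).
  set B := \sum_(0 <= i < K) `|c i| * L i.
  have IfS := L2_int_mul Lf (LS phi f Lphi K).
  have IB : P.-integrable setT (EFin \o (fun x => `|f x| * B)).
    exact: (@eqint _ _ _ P _ _ (integrableZr measurableT B Iabs)).
  have h1 : ip P f (fun x => \sum_(0 <= i < K) c i * phi i x)
            <= Rintegral P setT (fun x => `|f x| * B).
    apply: ae_le_Rint => //.
    apply: filterS hphi => x /= hx.
    apply: (le_trans (ler_norm _)); rewrite normrM; apply: ler_wpM2l => //.
    apply: (le_trans (ler_norm_sum _ _ _)); apply: ler_sum => i _.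
    by rewrite normrM; apply: ler_wpM2l.
  apply: (le_trans h1); rewrite RintegralZr // absE -c0E.
  have hB := BT K KK.
  have hc0' : c 0%N <= 0 := hc0.
  have : (c 0%N + G) * B <= (c 0%N + G) * (2 * T).
    by apply: ler_wpM2l => //; rewrite c0E -absE.
  move=> h2; apply: (le_trans h2).
  have : c 0%N * (2 * T) <= 0 by apply: mulr_le0_ge0 => //; apply: mulr_ge0.
  move=> h3; rewrite mulrDl [2 * T * G]mulrC.
  by rewrite -[X in _ <= X]add0r lerD2r.
have hcv := sumsq_cvg phi Lphi orth Lf (conv f Lf).
have QTG : Q <= 2 * T * G.
  have -> : Q = limn (fun K => \sum_(0 <= i < K) c i ^+ 2).
    by rewrite (cvg_lim _ hcv).
  apply: limr_le; first exact: cvgP hcv.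
  by exists K0 => // K /= KK; exact: SB.
have fin := @final_alg R Q T (G / 2) p A Sg Q0 T0 _ FQ TAS AQ Sg0 p0.
have key : 16^-1 <= p * Sg.
  apply: fin; apply: (le_trans QTG).
  have -> : 4 * T * (G / 2) = 2 * T * G by field.
  exact: lexx.
have Ssum : (\sum_(n <oo | (s * c n < 0)%R) ((fine (Linf P (phi n))) ^+ 2)%:E)%E = Sg%:E.
  apply: cvg_lim => //; apply: cvg_near_cst; exists K0 => // K /= KK.
  by rewrite sumEFin (sum_cut _ _ _ _ KK notP).
split.
  by rewrite pE Ssum -EFinM lee_fin.
set km := kmin (fun n => s * c n).
have kex : exists k, [set k | [/\ (1 <= k)%N, (forall n, (k <= n)%N -> 0 <= s * c n) &
     forall k', (1 <= k')%N -> (forall n, (k' <= n)%N -> 0 <= s * c n) -> (k <= k')%N]] k.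
  have ex : exists k, `[< (1 <= k)%N /\ forall n, (k <= n)%N -> 0 <= s * c n >].
    exists K0.+1; apply/asboolP; split => // n Kn; apply: HK0'; exact: ltnW.
  case: (ex_minnP ex) => k /asboolP [k1 hk] kmin_min.
  exists k; split => // k' k'1 hk'; apply: kmin_min; exact/asboolP.
have [km1 hkm _] := xgetPex 0%N kex.
rewrite -/km in km1 hkm.
have notP' : forall i, (km <= i)%N -> ~~ (s * c i < 0).
  by move=> i Ki; rewrite -leNgt; exact: hkm.
have SgK : Sg <= \sum_(0 <= n < km) (fine (Linf P (phi n))) ^+ 2.
  have e1 := sum_cut (fun i => s * c i < 0) (fun i => L i ^+ 2) _ _ (leq_maxl K0 km) notP.
  have e2 := sum_cut (fun i => s * c i < 0) (fun i => L i ^+ 2) _ _ (leq_maxr K0 km) notP'.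
  rewrite /Sg -e1 e2 big_mkcond /=; apply: ler_sum => i _.
  by case: ifPn => // _; exact: sqr_ge0.
have hcov : forall e : R, (r_fX P dist o f < e%:E)%E -> (p%:E <= P (cball dist o e))%E.
  move=> e /ereal_inf_lt [y [r [_ hr] <-] ry].
  case: hr => N [mN PN sub].
  have mB := cball_meas o e hmet hopen.
  have incl : [set x | f x < 0] `<=` cball dist o e `|` N.
    move=> x /= fx.
    have [Nx|Nx] := pselect (N x); first by right.
    left; rewrite /cball /=.
    have h : r <= dist x o -> 0 <= f x.
      by apply: contrapT => hn; apply: Nx; apply: sub.
    have hlt : dist x o < r.
      rewrite ltNge; apply/negP => hle; have := h hle; by rewrite leNgt fx.
    case: hmet => _ _ dsym _.
    rewrite dsym; apply: ltW; apply: (lt_trans hlt); by rewrite -lte_fin.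
  rewrite -pE; have hle := le_measure P (mem_set mA) (mem_set (measurableU _ _ mB mN)) incl.

  have PN0 : P N = 0%E by exact: PN.
  have hU := measureU2 P mB mN; move: hU; set z := (X in (_ <= _ + X)%E) => hU.
  have z0 : z = 0%E by exact: PN.
  rewrite z0 adde0 in hU; exact: le_trans hle hU.
have Pball : (p%:E <= P (ecball dist o (r_fX P dist o f)))%E.
  case E: (r_fX P dist o f) => [r| |].
  - have -> : ecball dist o r%:E = cball dist o r.
      by apply/seteqP; split => x /=; rewrite /ecball /cball /= lee_fin.
    set F := fun n : nat => cball dist o (r + n.+1%:R^-1).
    have mF : forall n, measurable (F n) by move=> n; exact: cball_meas.
    have capE : \bigcap_n F n = cball dist o r.
      apply/seteqP; split => x /=.
      + move=> hx; rewrite /cball /=; apply/ler_addgt0Pr => eps eps0.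
        have [n hn] : exists n : nat, eps^-1 < n.+1%:R by eexists; exact: truncnS_gt.
        apply: le_trans (hx n I) _; rewrite lerD2l.
        rewrite -(invrK eps) lef_pV2 ?posrE ?invr_gt0 ?ltr0Sn //; exact: ltW.
      + move=> hx n _; rewrite /F /cball /=; apply: le_trans hx _.
        by rewrite lerDl invr_ge0.
    have hlt : (P (F 0%N) < +oo)%E.
      exact: le_lt_trans (probability_le1 P (mF 0%N)) (ltry _).
    have hmono : {homo F : n m / (n <= m)%N >-> (m <= n)%O}.
      move=> n m nm; rewrite subsetEset => x; rewrite /F /cball /= => hx.
      apply: le_trans hx _; rewrite lerD2l lef_pV2 ?posrE ?ltr0Sn // ler_nat.
      by rewrite ltnS.
    have mcap : measurable (\bigcap_n F n) by rewrite capE; exact: cball_meas.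
    have cv := nonincreasing_cvg_mu hlt mF mcap hmono.
    rewrite capE in cv.
    rewrite -(cvg_lim _ cv) //; apply: lime_ge; first by apply/cvg_ex; eexists; exact: cv.
    by apply: nearW => n /=; apply: hcov; rewrite E lte_fin ltrDl invr_gt0 ltr0Sn.
  - have -> : ecball dist o +oo = setT.
      by apply/seteqP; split => x //= _; rewrite /ecball /= leey.
    rewrite -pE; apply: (le_measure P (mem_set mA) (mem_set measurableT)); exact: subsetT.
  - exfalso.
    have := hcov (-1) (_ : _); rewrite E.
    have -> : cball dist o (-1) = set0.
      apply/seteqP; split => x //=; case: hmet => d0 _ _ _; rewrite /cball /= => hx.
      have := d0 o x; lra.
    move=> /(_ (ltNyr _)); rewrite measure0 lee_fin => hp.
    have : p * Sg <= 0 by apply: mulr_le0_ge0.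
    lra.
apply: (@le_trans _ _ (p%:E * Sg%:E)%E); first by rewrite -EFinM lee_fin.
by apply: lee_pmul => //; rewrite lee_fin.
Qed.
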